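(* Let $M,N$ be sharp, integral monoids, $\Gamma$ an $M$-metrised graph, $f:M\to N$ a monoid homomorphism, and $\Gamma'$ the edge contraction of $\Gamma$ along $f$. Then $\operatorname{dgon}(\Gamma')\le\operatorname{dgon}(\Gamma)$.
   Context: Monoids are commutative, sharp (only unit $0$), integral (cancellative), with groupification; $\langle m\rangle=\{km:k\in\mathbb Z\}$ and for $x=km$, $m\ne0$, $x/m:=k$. A graph is $(X,r,i)$, $X$ finite, $r$ idempotent, $i$ an involution, $i(x)=x\iff r(x)=x$; vertices $V$ = fixed points, half-edges $H=X\setminus V$, edges $\{e,i(e)\}$ joining $r(e),r(i(e))$, $H_v=\{e\in H:r(e)=v\}$; graphs are connected. An $M$-metrised graph adds $l:X\to M$ with $l(i(x))=l(x)$, $l(x)=0\iff x\in V$. Divisors: free abelian group on $V$, pointwise order; $\operatorname{Div}^k_+$ = effective divisors of degree $k$. $\operatorname{PL}(\Gamma)=\{g:V\to M^{gp}: g(r(e))-g(r(i(e)))\in\langle l(e)\rangle\ \forall e\in H\}$; $\Delta(g)=\sum_{v}\big(\sum_{e\in H_v}\frac{g(v)-g(r(i(e)))}{l(e)}\big)[v]$; $D\sim D'$ iff $D-D'\in\Delta(\operatorname{PL}(\Gamma))$; $|D|=\{E\ge0:E\sim D\}$; $r(D)=\max\{k\in\mathbb Z:|D-F|\ne\emptyset\ \forall F\in\operatorname{Div}^k_+(\Gamma)\}$; $\operatorname{dgon}(\Gamma)=\min\{\deg D: r(D)\ge1\}$. The edge contraction of $\Gamma$ along $f$ is the $N$-metrised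 graph obtained as the quotient of $X$ by the equivalence relation generated by $e\sim r(e)\sim i(e)\sim r(i(e))$ for every $e\in H$ with $f(l(e))=0$, with induced $r,i$ and length $f\circ l$. *)

(* Defs.v *)
From HB Require Import structures.
From mathcomp Require Import all_boot all_order all_algebra.
From Stdlib Require Import ClassicalEpsilon.
Set Implicit Arguments. Unset Strict Implicit. Unset Printing Implicit Defensive.
Import Order.TTheory GRing.Theory Num.Theory.
Local Open Scope ring_scope.

(* ---------- Monoids ----------
   A commutative, sharp, integral monoid with groupification is represented as
   a submonoid M of an abelian group G (its groupification), M generating G. *)
Definition sharp_integral_monoid (G : zmodType) (M : G -> Prop) : Prop :=
  [/\ M 0,
      (forall a b, M a -> M b -> M (a + b)),
      (forall a, M a -> M (- a) -> a = 0)
    & (forall x : G, exists a b, [/\ M a, M b & x = a - b])].  (* G = M^gp *)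

(* monoid homomorphism f : M -> N (f is only relevant on M) *)
Definition monoid_hom (G H : zmodType) (M : G -> Prop) (N : H -> Prop)
    (f : G -> H) : Prop :=
  [/\ f 0 = 0,
      (forall a b, M a -> M b -> f (a + b) = f a + f b)
    & (forall a, M a -> N (f a))].

(* x / m := the k with x = k m  (well defined for sharp integral monoids, m <> 0) *)
Definition mquot (G : zmodType) (x m : G) : int :=
  epsilon (inhabits 0%R) (fun k : int => x = m *~ k).

Section Graph.
Variables (X : finType) (r i : X -> X).

Definition is_vertex (x : X) : bool := r x == x.

Definition adj : rel X :=
  [rel x y | (y == r x) || (y == i x) || (x == r y) || (x == i y)].

Definition graph_connected : Prop :=
  (exists x : X, True) /\ (forall x y, connect adj x y).

Definition is_graph : Prop :=
  [/\ (forall x, r (r x) = r x),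
      (forall x, i (i x) = x),
      (forall x, i x = x <-> r x = x)
    & graph_connected].

Definition is_metrised_graph (G : zmodType) (M : G -> Prop) (l : X -> G) : Prop :=
  [/\ is_graph,
      (forall x, M (l x)),
      (forall x, l (i x) = l x)
    & (forall x, l x = 0 <-> r x = x)].

Definition is_divisor (D : X -> int) : Prop := forall x, r x != x -> D x = 0.
Definition deg (D : X -> int) : int := \sum_(x : X) D x.
Definition effective (D : X -> int) : Prop := forall x, 0 <= D x.

Variables (G : zmodType) (l : X -> G).

(* piecewise linear functions (only the values on vertices matter) *)
Definition is_PL (g : X -> G) : Prop :=
  forall e, r e != e -> exists k : int, g (r e) - g (r (i e)) = l e *~ k.

Definition laplacian (g : X -> G) : X -> int := fun v =>
  if r v == v then
    \sum_(e : X | (r e != e) && (r e == v)) mquot (g v - g (r (i e))) (l e)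
  else 0.

Definition lin_equiv (D D' : X -> int) : Prop :=
  exists g, is_PL g /\ forall x, D x - D' x = laplacian g x.

Definition linsys_nonempty (D : X -> int) : Prop :=
  exists E, [/\ is_divisor E, effective E & lin_equiv E D].

Definition rank_set (D : X -> int) (k : int) : Prop :=
  forall F, is_divisor F -> effective F -> deg F = k ->
    linsys_nonempty (fun x => D x - F x).

Definition is_rank (D : X -> int) (n : int) : Prop :=
  rank_set D n /\ forall k, rank_set D k -> k <= n.

Definition rank_ge1 (D : X -> int) : Prop :=
  exists n, is_rank D n /\ 1 <= n.

Definition is_dgon (n : int) : Prop :=
  (exists D, [/\ is_divisor D, rank_ge1 D & deg D = n]) /\
  (forall D, is_divisor D -> rank_ge1 D -> n <= deg D).

End Graph.

Definition contr_rel (X : finType) (r i : X -> X) (G H : zmodType)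
    (l : X -> G) (f : G -> H) : rel X :=
  [rel x y | [exists e : X, [&& r e != e, f (l e) == 0,
                 x \in [:: e; r e; i e; r (i e)] &
                 y \in [:: e; r e; i e; r (i e)]]]].

Definition is_edge_contraction (X : finType) (r i : X -> X) (G H : zmodType)
    (l : X -> G) (f : G -> H)
    (X' : finType) (r' i' : X' -> X') (l' : X' -> H) (q : X -> X') : Prop :=
  [/\ (forall y : X', exists x, q x = y),
      (forall x y, q x = q y <-> connect (contr_rel r i l f) x y),
      (forall x, r' (q x) = q (r x)),
      (forall x, i' (q x) = q (i x))
    & (forall x, l' (q x) = f (l x))].

(* Main.v *)
Require Import Defs.
From mathcomp Require Import all_boot all_order all_algebra.
From mathcomp Require Import zify.
From Stdlib Require Import ClassicalEpsilon Classical.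
Set Implicit Arguments. Unset Strict Implicit. Unset Printing Implicit Defensive.
Import Order.TTheory GRing.Theory Num.Theory.
Local Open Scope ring_scope.

Lemma mquot_eq (G : zmodType) (x m : G) (k : int) :
  (forall j : int, m *~ j = 0 -> j = 0) -> x = m *~ k -> mquot x m = k.
Proof.
move=> hm hx; rewrite /mquot.
have := epsilon_spec (inhabits 0%R) (fun k : int => x = m *~ k) (ex_intro _ k hx).
set k0 := epsilon _ _ => e0.
apply/eqP; rewrite -subr_eq0; apply/eqP; apply: hm.
by rewrite mulrzBr -e0 -hx subrr.
Qed.

Lemma sharp_inford (G : zmodType) (M : G -> Prop) (a : G) :
  sharp_integral_monoid M -> M a -> a != 0 -> forall k : int, a *~ k = 0 -> k = 0.
Proof.
case=> M0 MD Ms _ Ma an0.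
have Mn : forall n, M (a *+ n).
  by elim=> [|n IH]; rewrite ?mulr0n // mulrS; apply: MD.
have key : forall n : nat, a *+ n.+1 = 0 -> False.
  move=> n; rewrite mulrSr => /eqP; rewrite addr_eq0 => /eqP e.
  have : M (- a) by rewrite -e.
  by move/(Ms _ Ma)=> /eqP; rewrite (negbTE an0).
case=> [[|n]|n] //=.
- by move=> h; exfalso; apply: (key n).
- rewrite NegzE mulrNz => /eqP; rewrite oppr_eq0 => /eqP h; exfalso; exact: (key n).
Qed.

Section Abstract.
Variables (X : finType) (r i : X -> X) (G : zmodType) (l : X -> G).
Hypothesis hr : forall x, r (r x) = r x.
Hypothesis hi : forall x, i (i x) = x.
Hypothesis hedge : forall e, r e != e ->
  [/\ r (i e) != i e, l (i e) = l e & forall k : int, l e *~ k = 0 -> k = 0].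

Lemma lap_sum_edges g :
  \sum_x laplacian r i l g x =
  \sum_(e | r e != e) mquot (g (r e) - g (r (i e))) (l e).
Proof.
rewrite [RHS](partition_big r (fun v => r v == v)) /=; last by move=> e _; rewrite hr.
rewrite [LHS](bigID (fun v => r v == v)) /= [X in _ + X]big1 ?addr0; last first.
  by move=> v; rewrite /laplacian; case: (r v == v).
apply: eq_bigr => v hv; rewrite /laplacian hv.
by apply: eq_bigr => e /andP[_ /eqP <-].
Qed.

Lemma lap_sum0 g : is_PL r i l g -> \sum_x laplacian r i l g x = 0.
Proof.
move=> hg; rewrite lap_sum_edges.
set S := (\sum_(e | _) _).
have hS : S = - S.
  rewrite /S -sumrN [LHS](reindex_inj (can_inj hi)) /=.
  have eP : forall e, (r (i e) != i e) = (r e != e).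
    move=> e; apply/idP/idP => h.
      by rewrite -{2}(hi e) -[in r e](hi e); have [] := hedge h.
    by have [] := hedge h.
  rewrite [LHS](eq_bigl (fun e => r e != e)); last by move=> e; rewrite /= eP.
  apply: eq_bigr => e he.
  have [_ hl _] := hedge he.
  have [k hk] := hg e he.
  have [_ _ hinf] := hedge he.
  rewrite hi hl (mquot_eq hinf hk) (@mquot_eq _ _ _ (- k) hinf) //.
  by rewrite mulrNz -hk opprB.
have : S + S = 0 by rewrite {1}hS addNr.
lia.
Qed.

Lemma deg_equiv D D' : lin_equiv r i l D D' -> deg D = deg D'.
Proof.
case=> g [hg hD]; apply/eqP; rewrite -subr_eq0 /deg -sumrB; apply/eqP.
by rewrite (eq_bigr _ (fun x _ => hD x)) lap_sum0.
Qed.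

Lemma rank_le_deg (v0 : X) D (k : int) : r v0 = v0 ->
  rank_set r i l D k -> 0 <= k -> k <= deg D.
Proof.
move=> hv0 hk k0.
pose F := fun x : X => if x == v0 then k else 0.
have [|||E [_ hE hEq]] := hk F.
- by move=> x hx; rewrite /F; case: eqP => // ex; rewrite ex hv0 eqxx in hx.
- by move=> x; rewrite /F; case: eqP.
- by rewrite /deg /F -big_mkcond /= big_pred1_eq.
have := deg_equiv hEq; rewrite /deg sumrB -/(deg D).
have -> : \sum_x F x = k by rewrite /F -big_mkcond /= big_pred1_eq.
have : 0 <= \sum_x E x by apply: sumr_ge0 => x _; apply: hE.
move=> h1 h2; rewrite -subr_ge0 -h2 //.
Qed.

End Abstract.
Lemma int_max (P : int -> Prop) (a b : int) : P a -> (forall k, P k -> k <= b) ->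
  exists n, P n /\ forall k, P k -> k <= n.
Proof.
move=> Pa hb.
have ab : a <= b by apply: hb.
suff key : forall m : nat, forall a, P a -> (forall k, P k -> k <= a + m%:Z) ->
  exists n, P n /\ forall k, P k -> k <= n.
  apply: (key (absz (b - a)) a Pa) => k /hb; rewrite gez0_abs; [lia | lia].
elim=> [|m IH] a0 Pa0 hm.
  by exists a0; split => // k /hm; rewrite addr0.
case: (classic (exists k, P k /\ a0 + m%:Z < k)) => [[k [Pk hk]]|hno].
  exists k; split => // k' /hm; move: hk; lia.
apply: (IH a0 Pa0) => k Pk.
case: (lerP k (a0 + m%:Z)) => // hk; exfalso; apply: hno; exists k; split => //.
Qed.

Lemma int_min (P : int -> Prop) (a b : int) : P a -> (forall k, P k -> b <= k) ->
  exists n, P n /\ forall k, P k -> n <= k.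
Proof.
move=> Pa hb.
have [||n [Pn hn]] := @int_max (fun k => P (- k)) (- a) (- b).
- by rewrite opprK.
- by move=> k /hb; lia.
exists (- n); split => // k Pk; have := hn (- k); rewrite opprK => /(_ Pk); lia.
Qed.

Section Ext.
Variables (G H : zmodType) (M : G -> Prop) (N : H -> Prop) (f : G -> H).
Hypothesis hM : sharp_integral_monoid M.
Hypothesis hf : monoid_hom M N f.

Definition fext (x : G) : H :=
  let p := epsilon (inhabits (0 : G, 0 : G))
     (fun p : G * G => [/\ M p.1, M p.2 & x = p.1 - p.2]) in f p.1 - f p.2.

Lemma fext_eq a b : M a -> M b -> fext (a - b) = f a - f b.
Proof.
move=> Ma Mb; rewrite /fext.
have ex : exists p : G * G, [/\ M p.1, M p.2 & a - b = p.1 - p.2] by exists (a, b).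
have := epsilon_spec (inhabits (0 : G, 0 : G)) _ ex.
case: (epsilon _ _) => a0 b0 /= [Ma0 Mb0 e].
case: hf => _ fD _.
have e2 : a + b0 = a0 + b.
  by apply/eqP; rewrite -subr_eq addrAC e subrK.
have : f a + f b0 = f a0 + f b by rewrite -!fD // e2.
move=> h; apply/eqP; rewrite subr_eq addrAC h addrK //.
Qed.

Lemma fext_M a : M a -> fext a = f a.
Proof.
case: hM => M0 _ _ _; case: hf => f0 _ _ Ma.
by rewrite -{1}[a]subr0 fext_eq // f0 subr0.
Qed.

Lemma fextD x y : fext (x + y) = fext x + fext y.
Proof.
case: hM => M0 MD _ hgen; case: hf => _ fD _.
have [a [b [Ma Mb ->]]] := hgen x.
have [c [d [Mc Md ->]]] := hgen y.
have -> : a - b + (c - d) = (a + c) - (b + d) by rewrite opprD addrACA.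
have Mac := MD _ _ Ma Mc; have Mbd := MD _ _ Mb Md; rewrite !fext_eq //.
by rewrite !fD // opprD addrACA.
Qed.

Lemma fext0 : fext 0 = 0.
Proof. by apply: (addrI (fext 0)); rewrite addr0 -fextD addr0. Qed.

Lemma fextN x : fext (- x) = - fext x.
Proof. by apply: (addrI (fext x)); rewrite -fextD !subrr fext0. Qed.

Lemma fextB x y : fext (x - y) = fext x - fext y.
Proof. by rewrite fextD fextN. Qed.

Lemma fextMz x (k : int) : fext (x *~ k) = fext x *~ k.
Proof.
have hn : forall n : nat, fext (x *+ n) = fext x *+ n.
  by elim=> [|n IH]; rewrite ?mulr0n ?fext0 // !mulrS fextD IH.
case: k => n; first exact: hn.
by rewrite NegzE !mulrNz fextN -!pmulrn hn.
Qed.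

End Ext.

Lemma pair_sum0 (X : finType) (i : X -> X) (P : pred X) (h : X -> int) :
  involutive i -> (forall e, P e -> P (i e)) -> (forall e, P e -> h (i e) = - h e) ->
  \sum_(e | P e) h e = 0.
Proof.
move=> hi hP hh.
set S := (\sum_(e | P e) h e).
have hS : S = - S.
  rewrite /S -sumrN [LHS](reindex_inj (inv_inj hi)) /=.
  rewrite [LHS](eq_bigl P); last first.
    by move=> e; apply/idP/idP => [/hP|/hP//]; rewrite hi.
  by apply: eq_bigr => e /hh.
have : S + S = 0 by rewrite {1}hS addNr.
lia.
Qed.

Section Contr.
Variables (G H : zmodType) (M : G -> Prop) (N : H -> Prop).
Hypotheses (hM : sharp_integral_monoid M) (hN : sharp_integral_monoid N).
Variables (X : finType) (r i : X -> X) (l : X -> G).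
Hypothesis hGamma : is_metrised_graph r i M l.
Variables (f : G -> H).
Hypothesis hf : monoid_hom M N f.
Variables (X' : finType) (r' i' : X' -> X') (l' : X' -> H) (q : X -> X').
Hypothesis hcontr : is_edge_contraction r i l f r' i' l' q.

Let crel := contr_rel r i l f.

Lemma hr x : r (r x) = r x. Proof. by case: hGamma => [[]]. Qed.
Lemma hi x : i (i x) = x. Proof. by case: hGamma => [[]]. Qed.
Lemma hir x : i x = x <-> r x = x. Proof. by case: hGamma => [[]]. Qed.
Lemma hlM x : M (l x). Proof. by case: hGamma. Qed.
Lemma lsym x : l (i x) = l x. Proof. by case: hGamma. Qed.
Lemma l0 x : l x = 0 <-> r x = x. Proof. by case: hGamma. Qed.
Lemma hsurj y : exists x, q x = y. Proof. by case: hcontr. Qed.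
Lemma qconn x y : q x = q y <-> connect crel x y. Proof. by case: hcontr. Qed.
Lemma r'q x : r' (q x) = q (r x). Proof. by case: hcontr. Qed.
Lemma i'q x : i' (q x) = q (i x). Proof. by case: hcontr. Qed.
Lemma l'q x : l' (q x) = f (l x). Proof. by case: hcontr. Qed.
Lemma hfM a : M a -> N (f a). Proof. by move=> Ma; case: hf => _ _ h; apply: h. Qed.

Lemma half_i e : r e != e -> r (i e) != i e.
Proof.
move=> he; apply/eqP => h.
have h2 : i (i e) = i e by apply/hir.
rewrite hi in h2.
have := proj1 (hir e) (esym h2).
by move=> h3; rewrite h3 eqxx in he.
Qed.

Lemma inf_l e : r e != e -> forall k : int, l e *~ k = 0 -> k = 0.
Proof.
move=> he; apply: (sharp_inford hM (hlM e)); apply/eqP => /l0 h.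
by rewrite h eqxx in he.
Qed.

Lemma inf_fl e : f (l e) != 0 -> forall k : int, f (l e) *~ k = 0 -> k = 0.
Proof. by move=> he; apply: (sharp_inford hN (hfM (hlM e))). Qed.

Lemma single e : r e != e -> f (l e) != 0 -> forall y, connect crel e y -> y = e.
Proof.
move=> he hf0 y /connectP [[|z p] /= hp ->] //.
move: hp => /andP [hez _]; exfalso.
move: hez => /existsP [e0 /and4P [he0 hfe0 hin _]].
rewrite !inE in hin.
case/or4P: hin => /eqP ex.
- by rewrite ex hfe0 in hf0.
- by rewrite ex hr eqxx in he.
- by rewrite ex lsym hfe0 in hf0.
- by rewrite ex hr eqxx in he.
Qed.

Lemma crel_in e0 u v : r e0 != e0 -> f (l e0) = 0 ->
  u \in [:: e0; r e0; i e0; r (i e0)] -> v \in [:: e0; r e0; i e0; r (i e0)] ->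
  q u = q v.
Proof.
move=> he0 hf0 hu hv; apply/qconn; apply: connect1.
by apply/existsP; exists e0; rewrite he0 hf0 eqxx hu hv.
Qed.

Lemma q_contr_vert e : r e != e -> f (l e) = 0 -> r' (q e) = q e.
Proof.
move=> he hf0; rewrite r'q; apply: (crel_in he hf0); rewrite !inE eqxx ?orbT //.
Qed.

Lemma q_nc_half e : r e != e -> f (l e) != 0 -> r' (q e) != q e.
Proof.
move=> he hf0; apply/eqP; rewrite r'q => /esym /qconn /(single he hf0) h.
by rewrite h eqxx in he.
Qed.

Lemma pre_half y : r' y != y -> exists e, [/\ q e = y, r e != e & f (l e) != 0].
Proof.
move=> hy; have [e qe] := hsurj y.
have he : r e != e.
  by apply/negP => /eqP he; move: hy; rewrite -qe r'q he eqxx.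
exists e; split => //.
apply/eqP => hf0; move: hy; rewrite -qe.
by rewrite (q_contr_vert he hf0) eqxx.
Qed.

Lemma hr' y : r' (r' y) = r' y.
Proof. by have [x <-] := hsurj y; rewrite !r'q hr. Qed.

Lemma hi' y : i' (i' y) = y.
Proof. by have [x <-] := hsurj y; rewrite !i'q hi. Qed.

Lemma hedge' y : r' y != y ->
  [/\ r' (i' y) != i' y, l' (i' y) = l' y & forall k : int, l' y *~ k = 0 -> k = 0].
Proof.
move=> hy; have [e [<- he hfe]] := pre_half hy.
rewrite i'q !l'q lsym; split => //.
- apply: q_nc_half; first exact: half_i.
  by rewrite lsym.
- exact: inf_fl.
Qed.


Lemma x0_ex : exists x : X, True.
Proof. by case: hGamma => [[_ _ _ []]]. Qed.

Lemma h_anti g e : is_PL r i l g -> r e != e ->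
  mquot (g (r (i e)) - g (r (i (i e)))) (l (i e)) =
  - mquot (g (r e) - g (r (i e))) (l e).
Proof.
move=> hg he; have [k hk] := hg e he.
rewrite hi lsym (mquot_eq (inf_l he) hk) (@mquot_eq _ _ _ (- k) (inf_l he)) //.
by rewrite mulrNz -hk opprB.
Qed.

Lemma PL_push g : is_PL r i l g -> exists g',
  is_PL r' i' l' g' /\
  forall y, \sum_(x | q x == y) laplacian r i l g x = laplacian r' i' l' g' y.
Proof.
move=> hg.
have [x0 _] := x0_ex.
pose pre y := odflt x0 [pick x | q x == y].
have qpre y : q (pre y) = y.
  rewrite /pre; case: pickP => [x /eqP //|h].
  by have [x hx] := hsurj y; move: (h x); rewrite hx eqxx.
pose g' y := fext M f (g (r (pre y))).
have step x w : crel x w -> fext M f (g (r x)) = fext M f (g (r w)).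
  move=> /existsP [e0 /and4P [he0 /eqP hfe0 hx hw]].
  have E : fext M f (g (r (i e0))) = fext M f (g (r e0)).
    have [k hk] := hg e0 he0.
    apply/eqP; rewrite eq_sym -subr_eq0 -(fextB hM hf) hk (fextMz hM hf).
    by rewrite (fext_M hM hf (hlM e0)) hfe0 mul0rz.
  have key u : u \in [:: e0; r e0; i e0; r (i e0)] ->
      fext M f (g (r u)) = fext M f (g (r e0)).
    by rewrite !inE => /or4P [] /eqP ->; rewrite ?hr.
  by rewrite (key x hx) (key w hw).
have const x z : connect crel x z -> fext M f (g (r x)) = fext M f (g (r z)).
  move/connectP=> [p]; elim: p x => [|w p IH] x /=; first by move=> _ ->.
  by move=> /andP[hxw hp] hz; rewrite (step _ _ hxw) (IH w hp hz).
have g'q x : g' (q x) = fext M f (g (r x)).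
  by rewrite /g'; apply: const; apply/qconn; rewrite qpre.
pose h e := mquot (g (r e) - g (r (i e))) (l e).
exists g'; split.
  move=> y hy; have [e [qe he hfe]] := pre_half hy.
  have [k hk] := hg e he; exists k.
  rewrite -qe i'q !r'q !g'q !hr l'q -(fextB hM hf) hk (fextMz hM hf).
  by rewrite (fext_M hM hf (hlM e)).
move=> y.
have L1 : \sum_(x | q x == y) laplacian r i l g x =
          \sum_(e | (r e != e) && (q (r e) == y)) h e.
  rewrite [RHS](partition_big r (fun x => q x == y)) /=; last first.
    by move=> e /andP[_ ->].
  apply: eq_bigr => x hx; rewrite /laplacian.
  case: ifP => hrx.
    apply: eq_big => e; first by case: (r e =P x) => [->|]; rewrite ?hx ?andbT ?andbF.
    by move=> /andP[_ /eqP <-]; rewrite /h.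
  rewrite big_pred0 // => e; case: (r e =P x) => [ex|]; rewrite ?andbF //.
  by move: hrx; rewrite -ex hr eqxx.
rewrite L1 /laplacian.
case: ifP => hy; last first.
  rewrite big_pred0 // => e; apply/negP => /andP[_ /eqP hq].
  by move: hy; rewrite -hq -r'q hr' eqxx.
rewrite (bigID (fun e => f (l e) == 0)) /=.
rewrite [X in X + _](@pair_sum0 _ i) ?add0r; first last.
- move=> e /andP[/andP[he _] _]; exact: h_anti.
- move=> e /andP[/andP[he hq] hf0].
  rewrite (half_i he) lsym hf0 andbT /=.
  rewrite -(eqP hq); apply/eqP; apply: (crel_in he (eqP hf0)); rewrite !inE eqxx ?orbT //.
- exact: hi.
rewrite (partition_big q (fun e' => (r' e' != e') && (r' e' == y))) /=; last first.
  move=> e /andP[/andP[he hq] hf0]; rewrite q_nc_half // r'q hq //.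
apply: eq_bigr => e' /andP[he' /eqP hy'].
have [e [qe he hfe]] := pre_half he'.
rewrite (eq_bigl (fun e0 => e0 == e)); last first.
  move=> e0 /=; apply/idP/idP.
    move=> /andP[/andP[/andP[he0 _] hfe0] /eqP qe0].
    apply/eqP; apply: (single he hfe); apply/qconn; rewrite qe0 qe //.
  move=> /eqP ->; rewrite he hfe qe eqxx -r'q qe hy' eqxx //.
rewrite big_pred1_eq /h.
have [k hk] := hg e he.
rewrite (mquot_eq (inf_l he) hk) -qe -hy' -qe i'q !r'q !g'q !hr l'q.
apply: esym; apply: (mquot_eq (inf_fl hfe)).
by rewrite -(fextB hM hf) hk (fextMz hM hf) (fext_M hM hf (hlM e)).
Qed.


Definition push (D : X -> int) : X' -> int := fun y => \sum_(x | q x == y) D x.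

Lemma deg_push D : deg (push D) = deg D.
Proof.
by rewrite /deg /push [RHS](partition_big q xpredT) //.
Qed.

Lemma divisor_push D : is_divisor r D -> is_divisor r' (push D).
Proof.
move=> hD y hy; apply: big1 => x /eqP qx; apply: hD.
apply/negP => /eqP hx; move: hy; rewrite -qx r'q hx eqxx //.
Qed.

Lemma effective_push D : effective D -> effective (push D).
Proof. by move=> hD y; apply: sumr_ge0 => x _; apply: hD. Qed.

Lemma transfer D k : rank_set r i l D k -> rank_set r' i' l' (push D) k.
Proof.
move=> hk F' hF' eF' dF'.
have [x0 _] := x0_ex.
pose pre y := odflt x0 [pick x | q x == y].
have qpre y : q (pre y) = y.
  rewrite /pre; case: pickP => [x /eqP //|h].
  by have [x hx] := hsurj y; move: (h x); rewrite hx eqxx.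
pose s y := r (pre y).
pose F x := \sum_(y | s y == x) F' y.
have hF : is_divisor r F.
  move=> x hx; apply: big_pred0 => y; apply/negP => /eqP sy.
  by move: hx; rewrite -sy /s hr eqxx.
have eF : effective F by move=> x; apply: sumr_ge0 => y _; apply: eF'.
have dF : deg F = k by rewrite -dF' /deg /F [RHS](partition_big s xpredT).
have pF : forall y0, push F y0 = F' y0.
  move=> y0; rewrite /push /F.
  rewrite (eq_bigr (fun x => \sum_(y | (r' y == y0) && (s y == x)) F' y)); last first.
    move=> x /eqP qx; apply: eq_bigl => y; case: (s y =P x) => [sy|]; rewrite ?andbF ?andbT //.
    by rewrite -qx -sy /s -r'q qpre eqxx.
  rewrite -(partition_big s (fun x => q x == y0) (P := fun y => r' y == y0)); last first.
    by move=> y /eqP <-; rewrite /s -r'q qpre.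
  rewrite big_mkcond /= (bigD1 y0) //= big1 ?addr0; last first.
    move=> y hy; case: ifP => // /eqP hry.
    apply: hF'; apply/negP => /eqP e; move: hy; rewrite -hry e eqxx //.
  case: ifP => // /negbT hy0; apply/esym; exact: hF'.
have [E [hE eE [g [hg hEq]]]] := hk F hF eF dF.
have [g' [hg' hlap]] := PL_push hg.
exists (push E); split.
- exact: divisor_push.
- exact: effective_push.
exists g'; split => // y.
rewrite -hlap -pF /push -!sumrB.
by apply: eq_bigr => x _; rewrite hEq.
Qed.

Lemma main_sec n : is_dgon r i l n ->
  exists n' : int, is_dgon r' i' l' n' /\ n' <= n.
Proof.
move=> [[D [hD [n1 [[hr1 hmax] hn1]] dD]] _].
have [x0 _] := x0_ex.
have hv0 : r' (q (r x0)) = q (r x0) by rewrite r'q hr.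
have bound : forall D' k, rank_set r' i' l' D' k -> 0 <= k -> k <= deg D'.
  move=> D' k hk k0; exact: (rank_le_deg hr' hi' hedge' hv0 hk k0).
have hr1' := transfer hr1.
have bnd : forall D' k, rank_set r' i' l' D' k -> k <= `|deg D'|.
  move=> D' k hk; case: (lerP 0 k) => k0.
    exact: le_trans (bound _ _ hk k0) (ler_norm _).
  exact: le_trans (ltW k0) (normr_ge0 _).
have r1 : forall D', rank_ge1 r' i' l' D' -> 1 <= deg D'.
  move=> D' [m [[hm _] hm1]].
  have m0 : 0 <= m by exact: le_trans ler01 hm1.
  exact: le_trans hm1 (bound _ _ hm m0).
have [m [hm1 hm2]] := int_max hr1' (bnd (push D)).
have hD' : rank_ge1 r' i' l' (push D).
  exists m; split => //; apply: le_trans hn1 _; exact: hm2.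
pose S k := exists D', [/\ is_divisor r' D', rank_ge1 r' i' l' D' & deg D' = k].
have SD : S n by exists (push D); rewrite deg_push dD; split => //; exact: divisor_push.
have lb : forall k, S k -> 1 <= k by move=> k [D' [_ h <-]]; exact: r1.
have [n' [hn' hmin]] := @int_min S n 1 SD lb.
exists n'; split; last exact: hmin.
split => // D' hD1 hD2; apply: hmin; by exists D'.
Qed.


End Contr.

Theorem corollary4p6
  (G H : zmodType) (M : G -> Prop) (N : H -> Prop)
  (hM : sharp_integral_monoid M) (hN : sharp_integral_monoid N)
  (X : finType) (r i : X -> X) (l : X -> G)
  (hGamma : is_metrised_graph r i M l)
  (f : G -> H) (hf : monoid_hom M N f)
  (X' : finType) (r' i' : X' -> X') (l' : X' -> H) (q : X -> X')
  (hcontr : is_edge_contraction r i l f r' i' l' q) :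
  forall n : int, is_dgon r i l n ->
    exists n' : int, is_dgon r' i' l' n' /\ n' <= n.
Proof.
exact: (main_sec hM hN hGamma hf hcontr).
Qed.
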